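(* Let $K$ be a field of characteristic $p>0$, $e\in\mathbb N_{>0}$, $m\in\mathbb N_{>0}$. Every $m$-truncated $e$-dimensional HS-derivation $(D_{\mathbf i})_{\mathbf i\in[p^m]^e}$ on $K$ (over $\mathbb F_p$) extends to an $e$-dimensional HS-derivation $(D'_{\mathbf i})_{\mathbf i\in\mathbb N^e}$ on $K$, i.e. $D'_{\mathbf i}=D_{\mathbf i}$ for all $\mathbf i\in[p^m]^e$.
   Context: For $m\in\mathbb N_{>0}\cup\{\infty\}$ and a ring $R$ of characteristic $p$ put $R[\bar v]:=R[X_1,\dots,X_e]/(X_1^{p^m},\dots,X_e^{p^m})$, with $v_i$ the image of $X_i$ (for $m=\infty$, $R[\bar v]:=R[[X_1,\dots,X_e]]$). Let $[p^m]=\{0,\dots,p^m-1\}$ ($[p^\infty]=\mathbb N$), $\bar v^{\mathbf i}=v_1^{i_1}\cdots v_e^{i_e}$. An $m$-truncated $e$-dimensional HS-derivation on $R$ (over $\mathbb F_p$) is a family $(D_{\mathbf i}:R\to R)_{\mathbf i\in[p^m]^e}$ such that $r\mapsto\sum_{\mathbf i}D_{\mathbf i}(r)\bar v^{\mathbf i}$ is a ring homomorphism $R\to R[\bar v]$ and $D_{\mathbf 0}=\mathrm{id}_R$; for $m=\infty$ it is called an $e$-dimensional HS-derivation. *)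

(* Defs.v *)
From HB Require Import structures.
From mathcomp Require Import all_boot all_order all_algebra.
Set Implicit Arguments. Unset Strict Implicit. Unset Printing Implicit Defensive.
Import GRing.Theory.
Local Open Scope ring_scope.

Definition midx (e : nat) := {ffun 'I_e -> nat}.

Definition midx0 (e : nat) : midx e := [ffun _ => 0%N].

Definition in_box (e N : nat) (i : midx e) : bool := [forall t, (i t < N)%N].

(* Coefficient at v^i of the product (sum_j F_j v^j)(sum_k G_k v^k):
   sum over all decompositions i = j + k (componentwise) of F_j * G_k.
   j ranges over multi-indices with j <= i componentwise (encoded with
   components in 'I_(max_t i_t + 1)), and k := i - j. *)
Definition midx_conv (R : pzRingType) (e : nat) (F G : midx e -> R)
    (i : midx e) : R :=
  \sum_(j : {ffun 'I_e -> 'I_((\max_(t < e) i t).+1)} | [forall t, (j t <= i t)%N])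
     F [ffun t => nat_of_ord (j t)] * G [ffun t => (i t - j t)%N].

(* Family (D_i)_{i in P} of maps R -> R such that r |-> sum_{i in P} D_i(r) v^i
   is a ring homomorphism into R[v] (for P = [p^m]^e: R[X]/(X_k^{p^m});
   for P = N^e: R[[X]]) with D_0 = id.  Written out: additivity, 1 |-> 1,
   and multiplicativity coefficientwise (the coefficient of v^i, i in P, of
   a product only involves j, k <= i, which lie again in P).
   Values D_i for i outside P are irrelevant. *)
Definition is_HS_on (R : pzRingType) (e : nat) (P : pred (midx e))
    (D : midx e -> R -> R) : Prop :=
  [/\ forall r, D (midx0 e) r = r,
      forall i, P i -> forall a b, D i (a + b) = D i a + D i b,
      forall i, P i -> D i 1 = (i == midx0 e)%:R &
      forall i, P i -> forall a b,
        D i (a * b) = midx_conv (fun j => D j a) (fun k => D k b) i].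

Definition is_trunc_HS (R : pzRingType) (p m e : nat) (D : midx e -> R -> R) :=
  is_HS_on (in_box (p ^ m)) D.

Definition is_HS (R : pzRingType) (e : nat) (D : midx e -> R -> R) :=
  is_HS_on predT D.

(* Main.v *)
Require Import Defs.
From HB Require Import structures.
From mathcomp Require Import all_boot all_order all_algebra.
From Stdlib Require Import Classical ClassicalEpsilon.
From mathcomp Require boolp classical_sets.
Set Implicit Arguments. Unset Strict Implicit. Unset Printing Implicit Defensive.
Import GRing.Theory.
Local Open Scope ring_scope.

Section Lift.
Variables (K : fieldType) (B : comNzRingType) (p : nat).
Hypothesis pK : p \in [pchar K].
Hypothesis pB : p \in [pchar B].
Variables (I Z : B -> Prop).
Hypothesis I0 : I 0.
Hypothesis ID : forall x y, I x -> I y -> I (x + y).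
Hypothesis IM : forall x y, I y -> I (x * y).
Hypothesis Z0 : Z 0.
Hypothesis ZD : forall x y, Z x -> Z y -> Z (x + y).
Hypothesis ZM : forall x y, Z y -> Z (x * y).
Hypothesis IZ : forall x, I x -> Z x.
Hypothesis ZpI : forall z, Z z -> I (z ^+ p).
Variable phi : K -> B.
Hypothesis phiD : forall a b, phi (a + b) = phi a + phi b.
Hypothesis phi1 : phi 1 = 1.
Hypothesis phiM : forall a b, Z (phi (a * b) - phi a * phi b).

Lemma p_prime : prime p. Proof. exact: pcharf_prime pK. Qed.
Lemma p_gt0 : (0 < p)%N. Proof. exact: prime_gt0 p_prime. Qed.

Lemma IN x : I x -> I (- x).
Proof. by move=> h; rewrite -mulN1r; apply: IM. Qed.
Lemma IB x y : I x -> I y -> I (x - y).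
Proof. by move=> hx hy; apply: ID => //; apply: IN. Qed.
Lemma ZN x : Z x -> Z (- x).
Proof. by move=> h; rewrite -mulN1r; apply: ZM. Qed.
Lemma ZB x y : Z x -> Z y -> Z (x - y).
Proof. by move=> hx hy; apply: ZD => //; apply: ZN. Qed.
Lemma IMr x y : I x -> I (x * y).
Proof. by move=> h; rewrite mulrC; apply: IM. Qed.
Lemma ZMr x y : Z x -> Z (x * y).
Proof. by move=> h; rewrite mulrC; apply: ZM. Qed.

Lemma I_sum (J : Type) (r : seq J) (P : pred J) (F : J -> B) :
  (forall j, P j -> I (F j)) -> I (\sum_(j <- r | P j) F j).
Proof. by move=> h; elim/big_ind: _ => //; apply: ID. Qed.
Lemma Z_sum (J : Type) (r : seq J) (P : pred J) (F : J -> B) :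
  (forall j, P j -> Z (F j)) -> Z (\sum_(j <- r | P j) F j).
Proof. by move=> h; elim/big_ind: _ => //; apply: ZD. Qed.

Lemma I_trans x y z : I (x - y) -> I (y - z) -> I (x - z).
Proof. by move=> h1 h2; have := ID h1 h2; rewrite addrA subrK. Qed.
Lemma Z_trans x y z : Z (x - y) -> Z (y - z) -> Z (x - z).
Proof. by move=> h1 h2; have := ZD h1 h2; rewrite addrA subrK. Qed.
Lemma I_sym x y : I (x - y) -> I (y - x).
Proof. by move=> h; rewrite -opprB; apply: IN. Qed.
Lemma Z_sym x y : Z (x - y) -> Z (y - x).
Proof. by move=> h; rewrite -opprB; apply: ZN. Qed.
Lemma I_congM x x' y y' : I (x - x') -> I (y - y') -> I (x * y - x' * y').
Proof.
move=> h1 h2; have -> : x * y - x' * y' = x * (y - y') + (x - x') * y'.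
  by rewrite mulrBr mulrBl addrA subrK.
by apply: ID; [apply: IM | apply: IMr].
Qed.
Lemma Z_congM x x' y y' : Z (x - x') -> Z (y - y') -> Z (x * y - x' * y').
Proof.
move=> h1 h2; have -> : x * y - x' * y' = x * (y - y') + (x - x') * y'.
  by rewrite mulrBr mulrBl addrA subrK.
by apply: ZD; [apply: ZM | apply: ZMr].
Qed.
Lemma I_congD x x' y y' : I (x - x') -> I (y - y') -> I (x + y - (x' + y')).
Proof. by move=> h1 h2; rewrite opprD addrACA; apply: ID. Qed.
Lemma Z_congD x x' y y' : Z (x - x') -> Z (y - y') -> Z (x + y - (x' + y')).
Proof. by move=> h1 h2; rewrite opprD addrACA; apply: ZD. Qed.

Lemma frobB (u v : B) : (u - v) ^+ p = u ^+ p - v ^+ p.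
Proof. by have := pFrobenius_autB_comm pB (mulrC u v); rewrite !pFrobenius_autE. Qed.
Lemma frobDK (u v : K) : (u + v) ^+ p = u ^+ p + v ^+ p.
Proof. by have := pFrobenius_autD_comm pK (mulrC u v); rewrite !pFrobenius_autE. Qed.
Lemma frobNK (u : K) : (- u) ^+ p = - u ^+ p.
Proof. by have := pFrobenius_autN pK u; rewrite !pFrobenius_autE. Qed.
Lemma frobBK (u v : K) : (u - v) ^+ p = u ^+ p - v ^+ p.
Proof. by rewrite frobDK frobNK. Qed.
Lemma frob_injK (u v : K) : u ^+ p = v ^+ p -> u = v.
Proof.
move=> h; apply/eqP; rewrite -subr_eq0.
by have := expf_eq0 (u - v) p; rewrite p_gt0 frobBK h subrr eqxx /= => <-.
Qed.

Lemma ZpI2 u v : Z (u - v) -> I (u ^+ p - v ^+ p).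
Proof. by move=> h; rewrite -frobB; apply: ZpI. Qed.

Lemma phi0 : phi 0 = 0.
Proof. by have := phiD 0 0; rewrite addr0 => h; apply: (addrI (phi 0)); rewrite -h addr0. Qed.
Lemma phiN a : phi (- a) = - phi a.
Proof. by apply/eqP; rewrite -addr_eq0 -phiD addrC subrr phi0. Qed.
Lemma phiB a b : phi (a - b) = phi a - phi b.
Proof. by rewrite phiD phiN. Qed.
Lemma phi_sum (J : Type) (r : seq J) (P : pred J) (F : J -> K) :
  phi (\sum_(j <- r | P j) F j) = \sum_(j <- r | P j) phi (F j).
Proof. by elim/big_rec2: _ => [|j y1 y2 _ <-]; rewrite ?phi0 ?phiD. Qed.
Lemma phiX a n : Z (phi (a ^+ n) - phi a ^+ n).
Proof.
elim: n => [|n ih]; first by rewrite !expr0 phi1 subrr.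
rewrite !exprSr; apply: (Z_trans (phiM _ _)).
by apply: Z_congM => //; rewrite subrr.
Qed.


Record Inv (S : K -> Prop) (f : K -> B) : Prop := {
  Sp : forall c, S (c ^+ p);
  SD : forall x y, S x -> S y -> S (x + y);
  SM : forall x y, S x -> S y -> S (x * y);
  SN : forall x, S x -> S (- x);
  fD : forall x y, S x -> S y -> f (x + y) = f x + f y;
  fM : forall x y, S x -> S y -> I (f (x * y) - f x * f y);
  fZ : forall x, S x -> Z (f x - phi x);
  fp : forall c, f (c ^+ p) = phi c ^+ p }.

Section InvProps.
Variables (S : K -> Prop) (f : K -> B).
Hypothesis hI : Inv S f.

Lemma S0 : S 0. Proof. by have := Sp hI 0; rewrite expr0n gtn_eqF ?p_gt0. Qed.
Lemma S1 : S 1. Proof. by have := Sp hI 1; rewrite expr1n. Qed.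
Lemma f0 : f 0 = 0.
Proof. by have := fp hI 0; rewrite phi0 !expr0n gtn_eqF ?p_gt0. Qed.
Lemma f1 : f 1 = 1.
Proof. by have := fp hI 1; rewrite phi1 !expr1n. Qed.
Lemma fN x : S x -> f (- x) = - f x.
Proof.
move=> Sx; apply/eqP; rewrite -addr_eq0 -(fD hI) //; last exact: (SN hI).
by rewrite addrC subrr f0.
Qed.
Lemma SB x y : S x -> S y -> S (x - y).
Proof. by move=> hx hy; apply: (SD hI) => //; apply: (SN hI). Qed.
Lemma SX x n : S x -> S (x ^+ n).
Proof.
move=> Sx; elim: n => [|n ih]; first by rewrite expr0; apply: S1.
by rewrite exprS; apply: (SM hI).
Qed.
Lemma SV x : S x -> S x^-1.
Proof.
move=> Sx; have [->|nz] := eqVneq x 0; first by rewrite invr0; apply: S0.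
have -> : x^-1 = x ^+ p.-1 * x^-1 ^+ p.
  have e : x^-1 ^+ p = x^-1 * x^-1 ^+ p.-1 by rewrite -exprS prednK ?p_gt0.
  by rewrite e mulrCA -exprMn mulfV // expr1n mulr1.

by apply: (SM hI); [apply: SX | apply: (Sp hI)].
Qed.
Lemma S_sum (J : Type) (r : seq J) (P : pred J) (F : J -> K) :
  (forall j, P j -> S (F j)) -> S (\sum_(j <- r | P j) F j).
Proof. by move=> h; elim/big_ind: _ => //; [apply: S0 | apply: (SD hI)]. Qed.
Lemma f_sum (J : Type) (r : seq J) (P : pred J) (F : J -> K) :
  (forall j, P j -> S (F j)) ->
  f (\sum_(j <- r | P j) F j) = \sum_(j <- r | P j) f (F j).
Proof.
move=> h; elim: r => [|j r ih]; first by rewrite !big_nil f0.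
rewrite !big_cons; case: ifP => // Pj.
by rewrite (fD hI) ?ih //; [apply: h | apply: S_sum].
Qed.
Lemma SMn x n : S x -> S (x *+ n).
Proof.
move=> Sx; elim: n => [|n ih]; first by rewrite mulr0n; apply: S0.
by rewrite mulrS; apply: (SD hI).
Qed.
End InvProps.


Lemma guarded_choice (A C : Type) (c0 : C) (P : A -> C -> Prop) :
  exists g : A -> C, forall y, (exists z, P y z) -> P y (g y).
Proof.
have ex y : exists z, (exists z, P y z) -> P y z.
  case: (classic (exists z, P y z)) => [[z hz]|hn]; first by exists z.
  by exists c0 => h; case: hn.
by exists (fun y => proj1_sig (constructive_indefinite_description _ (ex y)))
  => y; case: (constructive_indefinite_description _ _).
Qed.

Section Ext.
Variables (S : K -> Prop) (f : K -> B).
Hypothesis hI : Inv S f.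
Variable a : K.
Hypothesis naS : ~ S a.

Definition polyS (q : {poly K}) := forall k, S q`_k.

Lemma polyS0 : polyS 0. Proof. by move=> k; rewrite coef0; apply: (S0 hI). Qed.
Lemma polySD q1 q2 : polyS q1 -> polyS q2 -> polyS (q1 + q2).
Proof. by move=> h1 h2 k; rewrite coefD; apply: (SD hI). Qed.
Lemma polySN q : polyS q -> polyS (- q).
Proof. by move=> h k; rewrite coefN; apply: (SN hI). Qed.
Lemma polySB q1 q2 : polyS q1 -> polyS q2 -> polyS (q1 - q2).
Proof. by move=> h1 h2; apply: polySD => //; apply: polySN. Qed.
Lemma polySM q1 q2 : polyS q1 -> polyS q2 -> polyS (q1 * q2).
Proof.
by move=> h1 h2 k; rewrite coefM; apply: (S_sum hI) => j _; apply: (SM hI).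
Qed.
Lemma polySC c : S c -> polyS c%:P.
Proof. by move=> h k; rewrite coefC; case: ifP => // _; apply: (S0 hI). Qed.
Lemma polySXn n : polyS 'X^n.
Proof. by move=> k; rewrite coefXn; case: (k == n); [apply: (S1 hI)|apply: (S0 hI)]. Qed.
Lemma polySX : polyS 'X.
Proof. by have := polySXn 1; rewrite expr1. Qed.
Lemma polySZ c q : S c -> polyS q -> polyS (c *: q).
Proof. by move=> hc h k; rewrite coefZ; apply: (SM hI). Qed.
Lemma polyS_deriv q : polyS q -> polyS q^`().
Proof. by move=> h k; rewrite coef_deriv; apply: (SMn hI). Qed.

Definition x := phi a.
Definition b := a ^+ p.
Lemma Sb : S b. Proof. exact: (Sp hI). Qed.
Definition F (q : {poly K}) := (map_poly f q).[x].

Lemma map_fD q1 q2 : polyS q1 -> polyS q2 ->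
  map_poly f (q1 + q2) = map_poly f q1 + map_poly f q2.
Proof.
move=> h1 h2; apply/polyP => i.
by rewrite coefD !coef_map_id0 ?(f0 hI) // coefD (fD hI).
Qed.
Lemma map_fN q : polyS q -> map_poly f (- q) = - map_poly f q.
Proof.
by move=> h; apply/polyP => i; rewrite coefN !coef_map_id0 ?(f0 hI) // coefN (fN hI).
Qed.
Lemma F_D q1 q2 : polyS q1 -> polyS q2 -> F (q1 + q2) = F q1 + F q2.
Proof. by move=> h1 h2; rewrite /F map_fD // hornerD. Qed.
Lemma F_N q : polyS q -> F (- q) = - F q.
Proof. by move=> h; rewrite /F map_fN // hornerN. Qed.
Lemma F_B q1 q2 : polyS q1 -> polyS q2 -> F (q1 - q2) = F q1 - F q2.
Proof. by move=> h1 h2; rewrite F_D ?F_N //; apply: polySN. Qed.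
Lemma F_C c : F c%:P = f c.
Proof.
rewrite /F; have -> : map_poly f c%:P = (f c)%:P.
  by apply/polyP => i; rewrite coef_map_id0 ?(f0 hI) // !coefC; case: ifP; rewrite ?(f0 hI).
by rewrite hornerC.
Qed.
Lemma F_Xn n : F 'X^n = x ^+ n.
Proof.
rewrite /F; have -> : map_poly f 'X^n = 'X^n.
  by apply/polyP => i; rewrite coef_map_id0 ?(f0 hI) // !coefXn; case: (i == n); rewrite ?(f0 hI) ?(f1 hI).
by rewrite hornerXn.
Qed.

Lemma I_horner (P : {poly B}) y : (forall k, I P`_k) -> I P.[y].
Proof. by move=> h; rewrite horner_coef; apply: I_sum => i _; apply: IMr. Qed.

Lemma F_M q1 q2 : polyS q1 -> polyS q2 -> I (F (q1 * q2) - F q1 * F q2).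
Proof.
move=> h1 h2; rewrite /F -hornerM -hornerN -hornerD; apply: I_horner => k.
rewrite coefB coefM !coef_map_id0 ?(f0 hI) // coefM (f_sum hI); last first.
  by move=> j _; apply: (SM hI).
rewrite -sumrB; apply: I_sum => j _.
by rewrite !coef_map_id0 ?(f0 hI) //; apply: (fM hI).
Qed.


Lemma sizeB_lt (u v : {poly K}) : u != 0 -> size u = size v ->
  lead_coef u = lead_coef v -> (size (u - v)%R < size u)%N.
Proof.
move=> nz esz elc; have := size_poly_gt0 u; rewrite nz.
case eu: (size u) => [//|m] _; rewrite ltnS; apply/leq_sizeP => j hj.
rewrite coefB; move: hj; rewrite leq_eqVlt => /orP[/eqP <-|hj].
  by move: elc; rewrite /lead_coef esz -esz eu /= => ->; rewrite subrr.
have /leq_sizeP h1 : (size u <= j)%N by rewrite eu.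
have /leq_sizeP h2 : (size v <= j)%N by rewrite -esz eu.
by rewrite h1 ?h2 ?subrr.
Qed.

Lemma Red n : forall q d : {poly K}, (size q <= n)%N -> polyS q -> polyS d -> d \is monic ->
  exists s t, [/\ polyS s, polyS t, q = s * d + t & (size t < size d)%N].
Proof.
elim: n => [|n ih] q d hq Sq Sd md.
  move: hq; rewrite leqn0 size_poly_eq0 => /eqP ->.
  exists 0, 0; split; rewrite ?mul0r ?addr0 //; try exact: polyS0.
  by rewrite size_poly0 size_poly_gt0 monic_neq0.
case: (ltnP (size q) (size d)) => hlt.
  by exists 0, q; split; rewrite ?mul0r ?add0r //; exact: polyS0.
have nzq : q != 0.
  by rewrite -size_poly_gt0 (leq_trans _ hlt) // size_poly_gt0 monic_neq0.
set k := (size q - size d)%N.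
set w := (lead_coef q *: 'X^k) * d.
have nzl : lead_coef q != 0 by rewrite lead_coef_eq0.
have nzc : lead_coef q *: 'X^k != 0 by rewrite scaler_eq0 negb_or nzl monic_neq0 ?monicXn.
have szw : size w = size q.
  rewrite /w size_Mmonic // size_scale // size_polyXn /k.
  have := size_poly_gt0 d; rewrite monic_neq0 // => hd.
  by rewrite addSn subnK.
have lcw : lead_coef w = lead_coef q.
  by rewrite /w lead_coef_Mmonic // lead_coefZ lead_coefXn mulr1.
have Sw : polyS w.
  apply: polySM => //; apply: polySZ; last exact: polySXn.
  by rewrite lead_coefE; apply: Sq.
have := sizeB_lt nzq (esym szw) (esym lcw) => hsz.
have [s [t [Ss St eq hst]]] := ih (q - w) d (leq_trans hsz hq) (polySB Sq Sw) Sd md.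
exists (s + lead_coef q *: 'X^k), t; split => //.
- apply: polySD => //; apply: polySZ; last exact: polySXn.
  by rewrite lead_coefE; apply: Sq.
- by rewrite mulrDl -/w addrAC -eq subrK.
Qed.


Lemma polyS_dp : polyS ('X^p - b%:P).
Proof. by apply: polySB; [apply: polySXn | apply: polySC; apply: Sb]. Qed.
Lemma monic_dp : ('X^p - b%:P) \is monic.
Proof. by apply/monicP; rewrite lead_coefXnsubC ?p_gt0. Qed.
Lemma size_dp : size ('X^p - b%:P) = p.+1.
Proof. by rewrite size_XnsubC ?p_gt0. Qed.
Lemma dp_root : ('X^p - b%:P).[a] = 0.
Proof. by rewrite hornerD hornerN hornerXn hornerC subrr. Qed.

Lemma frob_poly : ('X - a%:P) ^+ p = 'X^p - b%:P.
Proof.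
have pP : p \in [pchar {poly K}] by rewrite pchar_poly.
have := pFrobenius_autB_comm pP (mulrC 'X a%:P); rewrite !pFrobenius_autE => ->.
by rewrite -polyC_exp.
Qed.

Lemma noroot n : forall r : {poly K}, polyS r -> r != 0 -> (size r <= p)%N ->
  (size r <= n)%N -> r.[a] != 0.
Proof.
elim: n => [|n ih] r Sr nzr hrp hrn.
  by move: hrn; rewrite leqn0 size_poly_eq0 (negbTE nzr).
case: (leqP (size r) n) => hsn; first exact: ih.
have esz : size r = n.+1 by apply/eqP; rewrite eqn_leq hrn hsn.
have IH' (u : {poly K}) : polyS u -> u != 0 -> (size u < size r)%N -> u.[a] != 0.
  move=> Su nzu hu; apply: ih => //; first by rewrite (leq_trans (ltnW hu)).
  by rewrite -ltnS -esz.
apply/eqP => ra0.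
set c := lead_coef r.
have nzc : c != 0 by rewrite lead_coef_eq0.
set r1 := c^-1 *: r.
have Sr1 : polyS r1 by apply: polySZ => //; apply: (SV hI); rewrite /c lead_coefE; apply: Sr.
have mr1 : r1 \is monic by apply/monicP; rewrite /r1 lead_coefZ mulVf.
have sz1 : size r1 = size r by rewrite /r1 size_scale ?invr_eq0.
have r1a : r1.[a] = 0 by rewrite /r1 hornerZ ra0 mulr0.
have nzr1 : r1 != 0 by rewrite monic_neq0.
case: (eqVneq (size r) 1) => [s1|sn1].
  by move/eqP/size_poly1P: s1 => [c' nzc' er]; move: ra0; rewrite er hornerC => /eqP; rewrite (negbTE nzc').
have [n' en] : exists n', n = n'.+1.
  by move: sn1; rewrite esz; case: (n) => [|n'] //; exists n'.
subst n.
have hd : r1^`().[a] != 0.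
  apply: IH'; first exact: polyS_deriv.
    apply/eqP => /(congr1 (fun q : {poly K} => q`_n')).
    rewrite coef_deriv coef0.
    have := monicP mr1; rewrite lead_coefE sz1 esz /= => ->.
    move/eqP; rewrite -(dvdn_pcharf pK) => /dvdn_leq /= h.
    by have := h isT; rewrite leqNgt; move: hrp; rewrite esz => ->.
  by rewrite -sz1; apply: lt_size_deriv.
have [s [t [Ss St eq hst]]] := Red (leqnn _) polyS_dp Sr1 mr1.
have t0 : t = 0.
  apply/eqP; apply: contraT => nzt.
  have := IH' t St nzt (leq_trans hst (eq_leq sz1)).
  have : t.[a] = 0.
    by have := dp_root; rewrite eq hornerD hornerM r1a mulr0 add0r.
  by move=> ->; rewrite eqxx.
move: eq; rewrite t0 addr0 -frob_poly => eq.
have /factor_theorem [r2 er2] : root r1 a by apply/rootP.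
have r2a : r2.[a] != 0.
  by move: hd; rewrite er2 derivM derivXsubC mulr1 hornerD hornerM hornerXsubC subrr mulr0 add0r.
have e2 : ('X - a%:P) ^+ p.-1 = s * r2.
  apply: (mulIf (negbT (polyXsubC_eq0 a))); rewrite -exprSr prednK ?p_gt0 //.
  by rewrite eq er2 mulrA.
have cop : coprimep r2 (('X - a%:P) ^+ p.-1).
  by apply: coprimep_expr; rewrite coprimep_XsubC; apply/rootP/eqP.
have /coprimepP h := cop.
have : r2 %= 1 by apply: h; [exact: dvdpp | rewrite e2; apply: dvdp_mull; exact: dvdpp].
move/eqp_size; rewrite size_poly1 => sr2.
have sr1 : size r1 = 2.
  have nzr2 : r2 != 0 by rewrite -size_poly_gt0 sr2.
  by rewrite er2 size_Mmonic ?monicXsubC // sr2 size_XsubC.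
apply: naS.
have : r1.[a] = r1`_0 + r1`_1 * a.
  by rewrite horner_coef sr1 !big_ord_recl big_ord0 addr0 /= expr0 mulr1 expr1.
have -> : r1`_1 = 1 by have := monicP mr1; rewrite lead_coefE sr1.
rewrite r1a mul1r => /eqP; rewrite eq_sym addr_eq0 => /eqP h0.
have -> : a = - r1`_0 by rewrite h0 opprK.
by apply: (SN hI); apply: Sr1.
Qed.


Lemma rep_uniq (r1 r2 : {poly K}) : polyS r1 -> polyS r2 ->
  (size r1 <= p)%N -> (size r2 <= p)%N -> r1.[a] = r2.[a] -> r1 = r2.
Proof.
move=> S1 S2 h1 h2 e; apply/eqP; rewrite -subr_eq0; apply: contraT => nz.
have := @noroot (size (r1 - r2)) (r1 - r2) (polySB S1 S2) nz.
rewrite hornerD hornerN e subrr eqxx => /(_ _ (leqnn _)); apply.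
by rewrite (leq_trans (size_polyD _ _)) // size_polyN geq_max h1 h2.
Qed.

Definition S' (y : K) := exists q, polyS q /\ y = q.[a].

Lemma rep_ex y : S' y -> exists r, [/\ polyS r, (size r <= p)%N & r.[a] = y].
Proof.
move=> [q [Sq ->]].
have [s [t [Ss St eq hst]]] := Red (leqnn _) Sq polyS_dp monic_dp.
exists t; split => //; first by rewrite -ltnS -size_dp.
by rewrite eq hornerD hornerM dp_root mulr0 add0r.
Qed.

Lemma rep_fun : exists rep : K -> {poly K}, forall y, S' y ->
  [/\ polyS (rep y), (size (rep y) <= p)%N & (rep y).[a] = y].
Proof.
have [g hg] := guarded_choice 0 (fun y r => [/\ polyS r, (size r <= p)%N & r.[a] = y]).
by exists g => y /rep_ex /hg.
Qed.

Variable rep : K -> {poly K}.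
Hypothesis hrep : forall y, S' y ->
  [/\ polyS (rep y), (size (rep y) <= p)%N & (rep y).[a] = y].

Definition f' y := F (rep y).

Lemma rep_eq y r : polyS r -> (size r <= p)%N -> r.[a] = y -> rep y = r.
Proof.
move=> Sr sr ry; have [] := hrep (ex_intro _ r (conj Sr (esym ry))).
by move=> S1 s1 e1; apply: rep_uniq => //; rewrite e1.
Qed.

Lemma S'S y : S y -> S' y.
Proof. by move=> Sy; exists y%:P; rewrite hornerC; split => //; apply: polySC. Qed.

Lemma f'S y : S y -> f' y = f y.
Proof.
move=> Sy; rewrite /f' (@rep_eq y y%:P) ?F_C ?hornerC //; first exact: polySC.
by rewrite (leq_trans (size_polyC_leq1 _)) // prime_gt0 // p_prime.
Qed.

Lemma S'a : S' a.
Proof. by exists 'X; rewrite hornerX; split => //; apply: polySX. Qed.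

Lemma ext_Inv : Inv S' f'.
Proof.
split.
- by move=> c; apply: S'S; apply: (Sp hI).
- move=> _ _ [q1 [S1 ->]] [q2 [S2 ->]]; exists (q1 + q2); split; last by rewrite hornerD.
  exact: polySD.
- move=> _ _ [q1 [S1 ->]] [q2 [S2 ->]]; exists (q1 * q2); split; last by rewrite hornerM.
  exact: polySM.
- move=> _ [q1 [S1 ->]]; exists (- q1); split; last by rewrite hornerN.
  exact: polySN.
- move=> y1 y2 h1 h2; have [R1 s1 e1] := hrep h1; have [R2 s2 e2] := hrep h2.
  rewrite /f' (@rep_eq (y1 + y2) (rep y1 + rep y2)) ?F_D //; first exact: polySD.
    by rewrite (leq_trans (size_polyD _ _)) // geq_max s1 s2.
  by rewrite hornerD e1 e2.
- move=> y1 y2 h1 h2; have [R1 s1 e1] := hrep h1; have [R2 s2 e2] := hrep h2.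
  have Sq := polySM R1 R2.
  have [s [t [Ss St eq hst]]] := Red (leqnn _) Sq polyS_dp monic_dp.
  rewrite /f'; have -> : rep (y1 * y2) = t.
    apply: rep_eq => //; first by rewrite -ltnS -size_dp.
    by rewrite -e1 -e2 -hornerM eq hornerD hornerM dp_root mulr0 add0r.
  apply: I_trans (F_M R1 R2); rewrite eq F_D //; last exact: polySM polyS_dp.
  rewrite opprD addrA addrC addKr; apply: IN.
  have := F_M Ss polyS_dp; rewrite F_B ?F_Xn ?F_C; try exact: polySXn; try exact: polySC Sb.
  by rewrite /b (fp hI) /x subrr mulr0 subr0.
- move=> y hy; have [R s e] := hrep hy.
  rewrite /f' /F -{2}e (horner_coef_wide _ (size_poly _ _)) horner_coef (phi_sum) -sumrB.
  apply: Z_sum => i _; rewrite coef_map_id0 ?(f0 hI) //.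
  apply: (@Z_trans _ (phi (rep y)`_i * phi a ^+ i)).
    by apply: Z_congM; [apply: (fZ hI) | rewrite subrr].
  apply: Z_sym; apply: (Z_trans (phiM _ _)).
  by apply: Z_congM; [rewrite subrr | apply: phiX].
- move=> c; rewrite /f' (@rep_eq (c ^+ p) (c ^+ p)%:P) ?F_C ?hornerC ?(fp hI) //.
    by apply: polySC; apply: (Sp hI).
  by rewrite (leq_trans (size_polyC_leq1 _)) // prime_gt0 // p_prime.
Qed.

End Ext.


Lemma frobD (u v : B) : (u + v) ^+ p = u ^+ p + v ^+ p.
Proof. by have := pFrobenius_autD_comm pB (mulrC u v); rewrite !pFrobenius_autE. Qed.

Section Base.
Variable r : K -> K.
Hypothesis hr : forall c, (exists d, c = d ^+ p) -> c = (r c) ^+ p.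
Definition Sb0 (c : K) := exists d, c = d ^+ p.
Definition fb0 (c : K) := phi (r c) ^+ p.
Lemma fb0p c : fb0 (c ^+ p) = phi c ^+ p.
Proof.
rewrite /fb0; congr (phi _ ^+ _); apply: frob_injK; rewrite -hr //.
by exists c.
Qed.
Lemma Inv_base : Inv Sb0 fb0.
Proof.
split.
- by move=> c; exists c.
- by move=> _ _ [d1 ->] [d2 ->]; exists (d1 + d2); rewrite frobDK.
- by move=> _ _ [d1 ->] [d2 ->]; exists (d1 * d2); rewrite exprMn.
- by move=> _ [d1 ->]; exists (- d1); rewrite frobNK.
- by move=> _ _ [d1 ->] [d2 ->]; rewrite -frobDK !fb0p phiD frobD.
- move=> _ _ [d1 ->] [d2 ->]; rewrite -exprMn !fb0p -exprMn.
  exact: ZpI2.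
- by move=> _ [d ->]; rewrite fb0p; apply: Z_sym; apply: phiX.
- exact: fb0p.
Qed.
End Base.

Definition extR (u v : (K -> Prop) * (K -> B)) :=
  (forall y, u.1 y -> v.1 y) /\ (forall y, u.1 y -> v.2 y = u.2 y).

Lemma lift_main : exists psi : K -> B,
  [/\ forall a b, psi (a + b) = psi a + psi b, psi 1 = 1,
      forall a b, I (psi (a * b) - psi a * psi b) & forall a, Z (psi a - phi a)].
Proof.
have [r hr] := guarded_choice (0 : K) (fun c d : K => c = d ^+ p).
pose T := {sf : (K -> Prop) * (K -> B) | Inv sf.1 sf.2}.
pose t0 : T := exist _ (Sb0, fb0 r) (Inv_base hr).
pose R (u v : T) := boolp.asbool (extR (sval u) (sval v)).
have RP u v : R u v <-> extR (sval u) (sval v).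
  by split => [/boolp.asboolP | /boolp.asboolP].
have Rrefl : forall t, R t t by move=> t; apply/RP; split.
have Rtrans : forall u v w, R u v -> R v w -> R u w.
  move=> u v w /RP [h1 h2] /RP [h3 h4]; apply/RP; split => y hy; first by auto.
  by rewrite h4 ?h2 //; apply: h1.
have base_le : forall u, R t0 u.
  move=> [[Su fu] /= hu]; apply/RP; split => /= y [d ->]; first exact: (Sp hu).
  by rewrite (fp hu) fb0p.
have chain : forall A : classical_sets.set T, classical_sets.total_on A (fun x y => R x y) ->
    exists t, forall s, A s -> R s t.
  move=> A totA.
  pose C u := A u \/ u = t0.
  have totC u v : C u -> C v -> R u v \/ R v u.
    case=> [Au|->]; last by left.
    case=> [Av|->]; last by right.
    exact: totA.
  pose U y := exists u, C u /\ (sval u).1 y.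
  have [g hg] := guarded_choice t0 (fun y u => C u /\ (sval u).1 y).
  pose fU y := (sval (g y)).2 y.
  have key u y : C u -> (sval u).1 y -> fU y = (sval u).2 y.
    move=> Cu Suy; have [Cg Sgy] := hg y (ex_intro _ u (conj Cu Suy)).
    case: (totC _ _ Cu Cg) => /RP [h1 h2]; first by rewrite /fU h2.
    by rewrite /fU -h2.
  have common y1 y2 : U y1 -> U y2 -> exists w, [/\ C w, (sval w).1 y1 & (sval w).1 y2].
    move=> [u1 [C1 S1]] [u2 [C2 S2]]; case: (totC _ _ C1 C2) => /RP [h1 _].
      by exists u2; split => //; apply: h1.
    by exists u1; split => //; apply: h1.
  have Csp c : C t0 /\ (sval t0).1 (c ^+ p) by split; [right | exists c].
  have IU : Inv U fU.
    split.
    - by move=> c; exists t0; apply: Csp.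
    - move=> y1 y2 h1 h2; have [w [Cw S1 S2]] := common _ _ h1 h2.
      by exists w; split => //; apply: (SD (proj2_sig w)).
    - move=> y1 y2 h1 h2; have [w [Cw S1 S2]] := common _ _ h1 h2.
      by exists w; split => //; apply: (SM (proj2_sig w)).
    - move=> y [w [Cw S1]]; exists w; split => //; exact: (SN (proj2_sig w)).
    - move=> y1 y2 h1 h2; have [w [Cw S1 S2]] := common _ _ h1 h2.
      rewrite !(key w) //; first exact: (fD (proj2_sig w)).
      exact: (SD (proj2_sig w)).
    - move=> y1 y2 h1 h2; have [w [Cw S1 S2]] := common _ _ h1 h2.
      rewrite !(key w) //; first exact: (fM (proj2_sig w)).
      exact: (SM (proj2_sig w)).
    - by move=> y [w [Cw S1]]; rewrite (key w) //; exact: (fZ (proj2_sig w)).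
    - move=> c; have [C0 S0c] := Csp c; rewrite (key t0) //.
      exact: (fp (proj2_sig t0)).
  exists (exist _ (U, fU) IU) => s As; apply/RP; split => /= y hy.
    by exists s; split => //; left.
  by rewrite (key s) //; left.
have [[[Sm fm] hm] maxm] := classical_sets.ZL_preorder t0 Rrefl Rtrans chain.
have allS : forall a, Sm a.
  move=> a; apply: NNPP => naS.
  have [rep hrep] := @rep_fun _ _ hm a.
  have hI' := @ext_Inv _ _ hm a naS rep hrep.
  pose s := (exist _ (S' Sm a, f' fm a rep) hI' : T).
  have hR : R (exist _ (Sm, fm) hm) s.
    apply/RP; split => y hy /=; first exact: (@S'S _ _ hm a y hy).
    exact: (@f'S _ _ hm a naS rep hrep y hy).
  have /RP [h _] := maxm _ hR.
  by apply: naS; apply: h; apply: (@S'a _ _ hm a).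
exists fm; split.
- by move=> a b; apply: (fD hm).
- exact: (f1 hm).
- by move=> a b; apply: (fM hm).
- by move=> a; apply: (fZ hm).
Qed.

End Lift.

From mathcomp Require Import mpoly.
Import GRing.Theory.
Local Open Scope ring_scope.

Section Assembly.
Variables (K : fieldType) (e p : nat).
Hypothesis pK : p \in [pchar K].
Local Notation A := {mpoly K[e]}.

Lemma pA : p \in [pchar A].
Proof.
apply/andP; split; first exact: (pcharf_prime pK).
by rewrite -mpolyC_nat (pcharf0 pK) mpolyC0.
Qed.

Definition inbox N (m : 'X_{1..e}) := forall t, (m t < N)%N.
Definition Zb N (z : A) := forall m, inbox N m -> z@_m = 0.

Lemma Zb0 N : Zb N 0. Proof. by move=> m _; rewrite mcoeff0. Qed.
Lemma ZbD N x y : Zb N x -> Zb N y -> Zb N (x + y).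
Proof. by move=> hx hy m hm; rewrite mcoeffD hx ?hy ?addr0. Qed.
Lemma ZbM N x y : Zb N y -> Zb N (x * y).
Proof.
move=> hy m hm; rewrite mcoeffM big1 // => k /eqP ek; rewrite hy ?mulr0 // => t.
apply: leq_ltn_trans (hm t); move/mnmP: ek => /(_ t) ->.
by rewrite mnmDE leq_addl.
Qed.
Lemma Zb_mono N N' z : (N <= N')%N -> Zb N' z -> Zb N z.
Proof. by move=> hN h m hm; apply: h => t; apply: leq_trans (hm t) hN. Qed.

Lemma Zbp N z : (0 < N)%N -> Zb N z -> Zb N.+1 (z ^+ p).
Proof.
move=> N0 hz m hm.
have -> : z ^+ p = \sum_(m' <- msupp z) (z@_m' ^+ p *: 'X_[m' *+ p]).
  rewrite {1}(mpolyE z) -(pFrobenius_autE pA) rmorph_sum /=.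
  apply: eq_bigr => m' _; rewrite pFrobenius_autE exprZn mpolyXn //.
rewrite raddf_sum /= big1 // => m' _; rewrite mcoeffZ mcoeffX.
have p2 : (2 <= p)%N by apply: prime_gt1; exact: (pcharf_prime pK).
case: (eqVneq (z@_m') 0) => [->|nz]; first by rewrite expr0n gtn_eqF ?mul0r // (leq_trans _ p2).
have : ~~ [forall t, (m' t < N)%N].
  by apply: contra nz => /forallP h; apply/eqP; apply: hz.
rewrite negb_forall => /existsP [t]; rewrite -leqNgt => ht.
case: eqP => [em|_]; last by rewrite mulr0.
have := hm t; rewrite -em mulmnE ltnS => h.
have : (N * 2 <= m' t * p)%N by apply: leq_mul.
have : (N.+1 <= N * 2)%N by rewrite muln2 -addnn -addn1 leq_add2l.
move=> h1 h2; have := leq_trans h1 (leq_trans h2 h).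
by rewrite ltnn.
Qed.


Definition Good N (psi : K -> A) :=
  [/\ forall a b, psi (a + b) = psi a + psi b, psi 1 = 1,
      forall a b, Zb N (psi (a * b) - psi a * psi b) & forall a, (psi a)@_0 = a].

Lemma step N psi : (0 < N)%N -> Good N psi ->
  exists psi', Good N.+1 psi' /\ forall a, Zb N (psi' a - psi a).
Proof.
move=> N0 [hD h1 hM h0].
have [psi' [hD' h1' hM' hZ']] := @lift_main K A p pK pA (Zb N.+1) (Zb N)
  (@Zb0 N.+1) (@ZbD N.+1) (@ZbM N.+1) (@Zb0 N) (@ZbD N) (@ZbM N) (fun z => @Zbp N z N0)
  psi hD h1 hM.
exists psi'; split => //; split => // a.
have : inbox N.+1 0%MM by move=> t; rewrite mnm0E.
have : inbox N 0%MM by move=> t; rewrite mnm0E.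
move=> /(hZ' a); rewrite mcoeffB h0 => /eqP; rewrite subr_eq0 => /eqP ->.
by [].
Qed.


Definition mn (i : midx e) : 'X_{1..e} := [multinom i t | t < e].
Lemma mnE i t : mn i t = i t. Proof. by rewrite /mn mnmE. Qed.

Lemma mcoeffM_conv (P Q : A) (i : midx e) :
  (P * Q)@_(mn i) = midx_conv (fun j => P@_(mn j)) (fun k => Q@_(mn k)) i.
Proof.
set M := (\max_(t < e) i t)%N.
set k := (mdeg (mn i)).+1.
have iM t : (i t <= M)%N by rewrite /M (bigD1 t) //= leq_maxl.
have -> : (P * Q)@_(mn i) = (mpoly_mul P Q)@_(mn i) by [].
rewrite (mcoeff_poly_mul_lin P Q (leqnn k)) /midx_conv -/M.
pose fromB (h : 'X_{1..e < k}) : {ffun 'I_e -> 'I_M.+1} := [ffun t => inord (h t)].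
pose toB (j : {ffun 'I_e -> 'I_M.+1}) : 'X_{1..e < k} :=
  insubd (@bm0 e (mdeg (mn i))) (mn [ffun t => nat_of_ord (j t)]).
have degle (j : {ffun 'I_e -> 'I_M.+1}) : [forall t, (j t <= i t)%N] ->
    (mdeg (mn [ffun t => nat_of_ord (j t)]) < k)%N.
  move=> /forallP hj; rewrite ltnS !mdegE; apply: leq_sum => t _.
  by rewrite !mnE ffunE hj.
have toBE (j : {ffun 'I_e -> 'I_M.+1}) : [forall t, (j t <= i t)%N] ->
    (toB j : 'X_{1..e}) = mn [ffun t => nat_of_ord (j t)].
  by move=> hj; rewrite /toB val_insubd /= degle.
rewrite (reindex_onto toB fromB); last first.
  move=> h hle; apply: val_inj; rewrite /toB val_insubd.
  have eh : mn [ffun t => nat_of_ord (fromB h t)] = h.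
    apply/mnmP => t; rewrite mnE !ffunE inordK //.
    rewrite ltnS (leq_trans _ (iM t)) //; move/mnm_lepP: hle => /(_ t).
    by rewrite mnE.
  by rewrite eh bmdeg.
have cond j : ((toB j <= mn i)%MM && (fromB (toB j) == j)) = [forall t, (j t <= i t)%N].
  apply/idP/idP.
    move=> /andP [hle /eqP hj]; apply/forallP => t.
    rewrite -hj /fromB ffunE.
    move/mnm_lepP: hle => /(_ t); rewrite mnE => hle.
    by rewrite inordK // ltnS (leq_trans hle (iM t)).
  move=> hj; rewrite /= toBE //; apply/andP; split.
    by apply/mnm_lepP => t; rewrite !mnE ffunE; move/forallP: hj.
  apply/eqP/ffunP => t; rewrite /fromB ffunE.
  have -> : toB j t = j t.
    by have := congr1 (fun mm : 'X_{1..e} => mm t) (toBE j hj); rewrite mnE ffunE.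
  by rewrite inord_val.
apply: eq_big => j; first exact: cond.
rewrite cond => hj; rewrite toBE //.
have -> : (mn i - mn [ffun t => nat_of_ord (j t)])%MM = mn [ffun t => (i t - j t)%N].
  by apply/mnmP => t; rewrite mnmBE !mnE !ffunE.
by [].
Qed.


Lemma midx_conv_eq (F F' G G' : midx e -> K) (i : midx e) :
  (forall j : midx e, (forall t, (j t <= i t)%N) -> F j = F' j) ->
  (forall j : midx e, (forall t, (j t <= i t)%N) -> G j = G' j) ->
  midx_conv F G i = midx_conv F' G' i.
Proof.
move=> hF hG; apply: eq_bigr => j /forallP hj.
rewrite hF ?hG // => t; rewrite ffunE //; exact: leq_subr.
Qed.

Definition fm (m : 'X_{1..e}) : midx e := [ffun t => m t].
Lemma mn_fm m : mn (fm m) = m. Proof. by apply/mnmP => t; rewrite mnE ffunE. Qed.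
Lemma fm_mn i : fm (mn i) = i. Proof. by apply/ffunP => t; rewrite ffunE mnE. Qed.
Lemma mn_inj : injective mn.
Proof. by move=> i j h; rewrite -(fm_mn i) h fm_mn. Qed.
Lemma mn0 : mn (midx0 e) = 0%MM.
Proof. by apply/mnmP => t; rewrite mnE ffunE mnm0E. Qed.


Section Init.
Variables (N0 : nat) (D : midx e -> K -> K).
Definition psi0 (a : K) : A :=
  \sum_(j : {ffun 'I_e -> 'I_N0}) D [ffun t => nat_of_ord (j t)] a *: 'X_[mn [ffun t => nat_of_ord (j t)]].

Lemma psi0E a m : (psi0 a)@_m = if [forall t, (m t < N0)%N] then D (fm m) a else 0.
Proof.
rewrite /psi0 raddf_sum /=; case: ifP => hb.
  have hb' t : (m t < N0)%N by move/forallP: hb.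
  pose j0 : {ffun 'I_e -> 'I_N0} := [ffun t => Ordinal (hb' t)].
  have ej0 : [ffun t => nat_of_ord (j0 t)] = fm m by apply/ffunP => t; rewrite !ffunE.
  rewrite (bigD1 j0) //= big1 ?addr0.
    by rewrite mcoeffZ mcoeffX ej0 mn_fm eqxx mulr1.
  move=> j nj; rewrite mcoeffZ mcoeffX; case: eqP => [ej|]; last by rewrite mulr0.
  case/negP: nj; apply/eqP/ffunP => t; apply: val_inj; rewrite /= ffunE /=.
  by have := congr1 (fun mm : 'X_{1..e} => mm t) ej; rewrite mnE ffunE.
rewrite big1 // => j _; rewrite mcoeffZ mcoeffX; case: eqP => [ej|]; last by rewrite mulr0.
move/negP: hb; case; apply/forallP => t; rewrite -ej mnE ffunE; exact: ltn_ord.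
Qed.

Lemma fm_box N m : inbox N m -> in_box N (fm m).
Proof. by move=> h; apply/forallP => t; rewrite ffunE. Qed.
Lemma fm0 : fm 0%MM = midx0 e.
Proof. by apply/ffunP => t; rewrite !ffunE mnm0E. Qed.

Lemma psi0_good : (0 < N0)%N -> is_HS_on (in_box N0) D -> Good N0 psi0.
Proof.
move=> N0pos [D0 DD D1 DM].
have boxP (m : 'X_{1..e}) : [forall t, (m t < N0)%N] -> in_box N0 (fm m).
  by move=> /forallP h; apply/forallP => t; rewrite ffunE.
split.
- move=> a b; apply/mpolyP => m; rewrite mcoeffD !psi0E.
  by case: ifP => hb; [rewrite DD //; apply: boxP | rewrite addr0].
- apply/mpolyP => m; rewrite psi0E mcoeff1; case: ifP => hb.
    rewrite D1 ?boxP //; congr (_%:R).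
    by rewrite -(inj_eq mn_inj) mn_fm mn0.
  case: eqP => // em; move/negP: hb; case; apply/forallP => t.
  by rewrite em mnm0E.
- move=> a b m hm.
  have hb : [forall t, (m t < N0)%N] by apply/forallP.
  rewrite mcoeffB psi0E hb -{2}(mn_fm m) mcoeffM_conv DM ?boxP //.
  rewrite (@midx_conv_eq (fun j => (psi0 a)@_(mn j)) (fun j => D j a)
                         (fun j => (psi0 b)@_(mn j)) (fun j => D j b)) ?subrr //.
    move=> j hj; rewrite psi0E fm_mn; case: ifP => // /negP []; apply/forallP => t.
    by rewrite mnE; apply: leq_ltn_trans (hj t) _; rewrite ffunE.
  move=> j hj; rewrite psi0E fm_mn; case: ifP => // /negP []; apply/forallP => t.
  by rewrite mnE; apply: leq_ltn_trans (hj t) _; rewrite ffunE.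
- move=> a; rewrite psi0E; case: ifP => [_|/negP []]; first by rewrite fm0 D0.
  by apply/forallP => t; rewrite mnm0E.
Qed.
End Init.


Lemma main_ext (m : nat) (D : midx e -> K -> K) :
  is_trunc_HS p m D ->
  exists D' : midx e -> K -> K,
    is_HS D' /\ (forall i, in_box (p ^ m) i -> D' i = D i).
Proof.
move=> hD; set N0 := (p ^ m)%N.
have N0pos : (0 < N0)%N by rewrite expn_gt0 prime_gt0 // (pcharf_prime pK).
have g0 := psi0_good N0pos hD.
have [sf hsf] := guarded_choice (fun _ : K => 0 : A)
  (fun (y : nat * (K -> A)) (z : K -> A) =>
     (0 < y.1)%N -> Good y.1 y.2 -> Good y.1.+1 z /\ forall a, Zb y.1 (z a - y.2 a)).
have hsf' N psi : (0 < N)%N -> Good N psi ->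
    Good N.+1 (sf (N, psi)) /\ forall a, Zb N (sf (N, psi) a - psi a).
  move=> hN hG; apply: (hsf (N, psi)) => //.
  have [psi' [h1 h2]] := step hN hG.
  by exists psi' => _ _; split.
pose psis := fix g k := match k with 0 => psi0 N0 D | k'.+1 => sf ((N0 + k')%N, g k') end.
have gk : forall k, Good (N0 + k) (psis k).
  elim => [|k ih]; first by rewrite addn0.
  rewrite addnS; exact: (hsf' _ _ (leq_trans N0pos (leq_addr _ _)) ih).1.
have dk : forall k a, Zb (N0 + k) (psis k.+1 a - psis k a).
  by move=> k a; exact: ((hsf' _ _ (leq_trans N0pos (leq_addr _ _)) (gk k)).2 a).
have coh : forall k k' a, (k <= k')%N -> Zb (N0 + k) (psis k' a - psis k a).
  move=> k k' a /subnK <-; elim: (k' - k)%N => [|d ih]; first by rewrite add0n subrr; exact: Zb0.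
  have -> : psis (d.+1 + k)%N a - psis k a =
    (psis (d + k).+1 a - psis (d + k)%N a) + (psis (d + k)%N a - psis k a).
    by rewrite addrA subrK.
  apply: ZbD => //; apply: (@Zb_mono _ (N0 + (d + k))) => //.
  by rewrite leq_add2l leq_addl.
have stable : forall k k' a (i : midx e), inbox (N0 + k) (mn i) -> (k <= k')%N ->
    (psis k' a)@_(mn i) = (psis k a)@_(mn i).
  move=> k k' a i hi hk; apply/eqP; rewrite -subr_eq0 -mcoeffB; apply/eqP.
  exact: coh.
pose kof (i : midx e) := (\sum_(t < e) i t)%N.
have kofP i : inbox (N0 + kof i) (mn i).
  move=> t; rewrite mnE /kof (bigD1 t) //= addnA ltn_addr //.
  by rewrite -[X in (X < _)%N]add0n ltn_add2r.
pose D' (i : midx e) (a : K) := (psis (kof i) a)@_(mn i).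
have D'E : forall i k a, inbox (N0 + k) (mn i) -> D' i a = (psis k a)@_(mn i).
  move=> i k a hk; rewrite /D' -(stable (kof i) (maxn k (kof i))) ?leq_maxr //.
  by rewrite (stable k) // leq_maxl.
exists D'; split.
  split.
  - move=> r; rewrite /D' mn0; by case: (gk (kof (midx0 e))) => _ _ _ ->.
  - by move=> i _ a b; rewrite /D'; case: (gk (kof i)) => -> _ _ _; rewrite mcoeffD.
  - move=> i _; rewrite /D'; case: (gk (kof i)) => _ -> _ _.
    by rewrite mcoeff1 -(inj_eq mn_inj) mn0.
  - move=> i _ a b; rewrite /D'; case: (gk (kof i)) => _ _ hM _.
    have := hM a b (mn i) (kofP i); rewrite mcoeffB => /eqP; rewrite subr_eq0 => /eqP ->.
    rewrite mcoeffM_conv; apply: midx_conv_eq => j hj; apply: esym; apply: (D'E _ (kof i)).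
      by move=> t; rewrite mnE; apply: leq_ltn_trans (hj t) _; have := kofP i t; rewrite mnE.
    by move=> t; rewrite mnE; apply: leq_ltn_trans (hj t) _; have := kofP i t; rewrite mnE.
move=> i hi; apply: boolp.functional_extensionality_dep => a.
have hb : inbox (N0 + 0) (mn i) by move=> t; rewrite addn0 mnE; move/forallP: hi.
rewrite (D'E _ 0) //= psi0E fm_mn; case: ifP => // /negP []; apply/forallP => t.
by rewrite mnE; move/forallP: hi.
Qed.

End Assembly.

Unset Implicit Arguments.
Set Strict Implicit.

Theorem corollary2p5 (K : fieldType) (p e m : nat)
    (charK : p \in [pchar K]) (he : (0 < e)%N) (hm : (0 < m)%N)
    (D : midx e -> K -> K) :
  is_trunc_HS p m D ->
  exists D' : midx e -> K -> K,
    is_HS D' /\ (forall i, in_box (p ^ m) i -> D' i = D i).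
Proof. exact: main_ext. Qed.
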